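(* Let $(X,d)$ be a complete metric space with $|X|\geqslant 3$ and let $T\colon X\to X$ be continuous and asymptotically regular. Suppose there exist $\alpha\in[0,\frac12)$ and a function $F\colon[0,\infty)^3\to[0,\infty)$ with $F(0,0,0)=0$ and $F$ continuous at $(0,0,0)$, such that $$d(Tx,Ty)+d(Ty,Tz)+d(Tx,Tz)\leqslant \alpha\big(d(x,y)+d(y,z)+d(z,x)\big)+F\big(d(x,Tx),d(y,Ty),d(z,Tz)\big)$$ for all pairwise distinct $x,y,z\in X$. Then $T$ has a fixed point, and $T$ has at most two fixed points.
   Context: A mapping $T\colon X\to X$ on a metric space is asymptotically regular if $\lim_{n\to\infty}d(T^{n+1}x,T^nx)=0$ for every $x\in X$. *)

(* Defs.v *)
From Stdlib Require Import Reals.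
Open Scope R_scope.

Definition is_metric {X : Type} (d : X -> X -> R) : Prop :=
  (forall x y, 0 <= d x y) /\
  (forall x y, d x y = 0 <-> x = y) /\
  (forall x y, d x y = d y x) /\
  (forall x y z, d x z <= d x y + d y z).

Definition seq_converges {X : Type} (d : X -> X -> R) (u : nat -> X) (l : X) : Prop :=
  forall eps, 0 < eps -> exists N, forall n, (N <= n)%nat -> d (u n) l < eps.

Definition cauchy_seq {X : Type} (d : X -> X -> R) (u : nat -> X) : Prop :=
  forall eps, 0 < eps -> exists N, forall m n, (N <= m)%nat -> (N <= n)%nat ->
    d (u m) (u n) < eps.

Definition complete_metric {X : Type} (d : X -> X -> R) : Prop :=
  forall u : nat -> X, cauchy_seq d u -> exists l, seq_converges d u l.

Definition metric_continuous {X : Type} (d : X -> X -> R) (T : X -> X) : Prop :=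
  forall x eps, 0 < eps -> exists delta, 0 < delta /\
    forall y, d x y < delta -> d (T x) (T y) < eps.

Fixpoint iter {X : Type} (n : nat) (T : X -> X) (x : X) : X :=
  match n with O => x | S k => T (iter k T x) end.

Definition asymptotically_regular {X : Type} (d : X -> X -> R) (T : X -> X) : Prop :=
  forall x eps, 0 < eps -> exists N, forall n, (N <= n)%nat ->
    Rabs (d (iter (S n) T x) (iter n T x)) < eps.

Definition cont_at_origin (F : R -> R -> R -> R) : Prop :=
  forall eps, 0 < eps -> exists delta, 0 < delta /\
    forall a b c, 0 <= a < delta -> 0 <= b < delta -> 0 <= c < delta ->
      Rabs (F a b c - F 0 0 0) < eps.

(* Main.v *)
Require Import Defs.
From Stdlib Require Import Reals Lra Psatz Classical.
Open Scope R_scope.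

Theorem theorem4p5 (X : Type) (d : X -> X -> R) (T : X -> X)
  (alpha : R) (F : R -> R -> R -> R) :
  is_metric d ->
  complete_metric d ->
  (exists x y z : X, x <> y /\ y <> z /\ x <> z) ->
  metric_continuous d T ->
  asymptotically_regular d T ->
  0 <= alpha < 1/2 ->
  (forall a b c, 0 <= a -> 0 <= b -> 0 <= c -> 0 <= F a b c) ->
  F 0 0 0 = 0 ->
  cont_at_origin F ->
  (forall x y z : X, x <> y -> y <> z -> x <> z ->
     d (T x) (T y) + d (T y) (T z) + d (T x) (T z)
       <= alpha * (d x y + d y z + d z x) + F (d x (T x)) (d y (T y)) (d z (T z))) ->
  (exists x, T x = x) /\
  (forall x y z : X, T x = x -> T y = y -> T z = z -> x = y \/ y = z \/ x = z).
Proof.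
  intros [Hpos [Hzero [Hsym Htri]]] Hcomp [x0 _] Hcont Har Ha HF HF0 HFc Hineq.
  split.
  2:{ intros x y z Hx Hy Hz.
      destruct (classic (x = y)) as [|Hxy]; [now left|].
      destruct (classic (y = z)) as [|Hyz]; [now right; left|].
      destruct (classic (x = z)) as [|Hxz]; [now right; right|].
      exfalso. pose proof (Hineq x y z Hxy Hyz Hxz) as H.
      rewrite Hx, Hy, Hz in H.
      assert (E : d x x = 0) by (apply Hzero; reflexivity).
      assert (E2 : d y y = 0) by (apply Hzero; reflexivity).
      assert (E3 : d z z = 0) by (apply Hzero; reflexivity).
      rewrite E, E2, E3, HF0 in H.
      assert (P : 0 < d x y).
      { destruct (Hpos x y) as [|e]; auto. symmetry in e. apply Hzero in e; contradiction. }
      rewrite (Hsym z x) in H.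
      pose proof (Hpos y z). pose proof (Hpos x z).
      nra. }
  destruct (classic (exists x, T x = x)) as [|Hnf]; [assumption|].
  set (u := fun n => iter n T x0).
  assert (hne : forall n, u n <> u (S n)).
  { intros n e. apply Hnf. exists (u n). symmetry. exact e. }
  assert (ha : forall eps, 0 < eps -> exists N, forall n, (N <= n)%nat -> d (u n) (u (S n)) < eps).
  { intros eps he. destruct (Har x0 eps he) as [N HN]. exists N. intros n Hn.
    specialize (HN n Hn). rewrite Rabs_pos_eq in HN by apply Hpos.
    rewrite Hsym. exact HN. }
  assert (Hcauchy : cauchy_seq d u).
  { intros eps he.
    destruct (HFc (eps/4)) as [del [Hdel Hdel2]]; [lra|].
    destruct (ha (Rmin del (eps/16))) as [N HN].
    { apply Rmin_glb_lt; lra. }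
    exists N. intros n m Hn Hm.
    assert (A1 : d (u n) (u (S n)) < Rmin del (eps/16)) by (apply HN; lia).
    assert (A2 : d (u (S n)) (u (S (S n))) < Rmin del (eps/16)) by (apply HN; lia).
    assert (A3 : d (u m) (u (S m)) < Rmin del (eps/16)) by (apply HN; lia).
    pose proof (Rmin_l del (eps/16)). pose proof (Rmin_r del (eps/16)).
    destruct (classic (u n = u m)) as [e|Hnm].
    { rewrite e. replace (d (u m) (u m)) with 0 by (symmetry; apply Hzero; reflexivity). lra. }
    destruct (classic (u (S n) = u m)) as [e|Hnm2].
    { rewrite <- e. lra. }
    pose proof (Hineq (u n) (u (S n)) (u m) (hne n) Hnm2 Hnm) as HI.
    change (T (u n)) with (u (S n)) in HI.
    change (T (u (S n))) with (u (S (S n))) in HI.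
    change (T (u m)) with (u (S m)) in HI.
    assert (HFv : F (d (u n) (u (S n))) (d (u (S n)) (u (S (S n)))) (d (u m) (u (S m))) < eps/4).
    { pose proof (Hdel2 (d (u n) (u (S n))) (d (u (S n)) (u (S (S n)))) (d (u m) (u (S m)))) as K.
      rewrite HF0, Rminus_0_r in K.
      assert (K2 : Rabs (F (d (u n) (u (S n))) (d (u (S n)) (u (S (S n)))) (d (u m) (u (S m)))) < eps/4).
      { apply K; split; try apply Hpos; lra. }
      pose proof (Rle_abs (F (d (u n) (u (S n))) (d (u (S n)) (u (S (S n)))) (d (u m) (u (S m))))). lra. }
    set (D := d (u n) (u m)).
    pose proof (Htri (u n) (u (S n)) (u (S m))) as T1.
    pose proof (Htri (u n) (u (S m)) (u m)) as T2.
    pose proof (Htri (u (S n)) (u (S (S n))) (u (S m))) as T3.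
    pose proof (Htri (u (S n)) (u n) (u m)) as T4.
    rewrite (Hsym (u (S m)) (u m)) in T2.
    rewrite (Hsym (u (S n)) (u n)) in T4.
    rewrite (Hsym (u m) (u n)) in HI.
    fold D in T2, T4, HI.
    assert (B : alpha * (d (u n) (u (S n)) + d (u (S n)) (u m) + D)
                <= alpha * (2 * d (u n) (u (S n)) + 2 * D)).
    { apply Rmult_le_compat_l; lra. }
    assert (B2 : alpha * d (u n) (u (S n)) <= d (u n) (u (S n)) / 2).
    { pose proof (Hpos (u n) (u (S n))). nra. }
    assert (B3 : D <= (2 - 2*alpha) * D).
    { pose proof (Hpos (u n) (u m)). fold D in H1. nra. }
    pose proof (Hpos (u (S n)) (u (S (S n)))).
    pose proof (Hpos (u (S (S n))) (u (S m))).
    nra. }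
  destruct (Hcomp u Hcauchy) as [l Hl].
  exists l.
  assert (Hd : forall eps, 0 < eps -> d l (T l) < eps).
  { intros eps he.
    destruct (Hcont l (eps/2)) as [del [Hdel Hdel2]]; [lra|].
    destruct (Hl (Rmin del (eps/2))) as [N HN]; [apply Rmin_glb_lt; lra|].
    pose proof (Rmin_l del (eps/2)). pose proof (Rmin_r del (eps/2)).
    assert (E1 : d (u N) l < Rmin del (eps/2)) by (apply HN; lia).
    assert (E2 : d (u (S N)) l < Rmin del (eps/2)) by (apply HN; lia).
    assert (E3 : d (T l) (T (u N)) < eps/2).
    { apply Hdel2. rewrite Hsym. lra. }
    change (T (u N)) with (u (S N)) in E3.
    pose proof (Htri l (u (S N)) (T l)).
    rewrite (Hsym l (u (S N))) in H1. rewrite (Hsym (u (S N)) (T l)) in H1. lra. }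
  symmetry. apply Hzero.
  destruct (Hpos l (T l)) as [p|e]; [|symmetry; exact e].
  specialize (Hd _ p). lra.
Qed.
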